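(* Let $F$ be a field of characteristic zero, let $A$ be $F[x,y]$ or $F_0[x,y]$, and let $r\ge0$, $c\ge\nu(0)$ be integers. Let $R$ be a Rota–Baxter operator of weight zero on $A$ defined by $R(x^ny^m)=\alpha_{n,m}y^{m+rn+c}$ with $\alpha_{n,m}\in F$, for all $n,m\ge0$ with $n+m\ge\nu(0)$. a) If $r=c=0$, then on $F[x,y]$ we have $R=0$, and on $F_0[x,y]$ there exists $k>0$ such that $\alpha_{0,k}\ne0$ and for all $n+m\ge1$: $$\alpha_{n,m}=\begin{cases}\alpha_{0,k}/a, & n=0,\ m=ak,\ a\ge1,\\ 0,&\text{otherwise}.\end{cases}$$ b) If $r+c>0$, then there exist a set $I\subseteq\mathbb{N}$, an integer $\Delta$, and integers $\{k_i\}_{i\in I}$ with $\alpha_{i,k_i}\ne0$, $\nu(i)\le k_i$, $k_i-\nu(0)<\Delta\le k_i+ri+c$ and $\Delta\mid k_i+ri+c$ for all $i\in I$, such that for all $l,t\ge0$ with $l+t\ge\nu(0)$: $$\alpha_{l,t}=\begin{cases}\dfrac{(k_l+rl+c)\,\alpha_{l,k_l}}{k_l+rl+c+\Delta s}, & l\in I,\ t=k_l+\Delta s,\ s\ge0,\\ 0,&\text{otherwise}.\end{cases}$$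
   Context: $\mathbb{N}$ includes $0$. $F_0[x,y]$ is the ideal of $F[x,y]$ generated by $x,y$ (spanned by monomials $x^ny^m$ with $n+m\ge1$). The function $\nu$ depends on the algebra: for $F[x,y]$, $\nu(n)=0$ for all $n$; for $F_0[x,y]$, $\nu(0)=1$ and $\nu(n)=0$ for $n>0$. A linear operator $R$ on an algebra $A$ is a Rota–Baxter operator of weight zero if $R(a)R(b)=R(R(a)b+aR(b))$ for all $a,b\in A$. *)

(* Defs.v *)
(* F[x,y] is modelled as {poly {poly F}}:
   x is the outer variable 'X, y is the constant polynomial ('X)%:P. *)
From HB Require Import structures.
From mathcomp Require Import all_boot all_order all_algebra.
Set Implicit Arguments. Unset Strict Implicit. Unset Printing Implicit Defensive.
Import Order.TTheory GRing.Theory Num.Theory.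
Local Open Scope ring_scope.

Definition xy (F : fieldType) (n m : nat) : {poly {poly F}} :=
  'X^n * ('X^m)%:P.

(* Membership in F_0[x,y] = ideal (x,y): zero constant term. *)
Definition in_F0 (F : fieldType) (p : {poly {poly F}}) : bool :=
  (p`_0)`_0 == 0.

(* The algebra A: [zero = false] means A = F[x,y], [zero = true] means A = F_0[x,y]. *)
Definition inA (F : fieldType) (zero : bool) (p : {poly {poly F}}) : bool :=
  if zero then in_F0 p else true.

Definition nu (zero : bool) (n : nat) : nat := (zero && (n == 0%N))%N.

(* Main.v *)
Require Import Defs.
From HB Require Import structures.
From mathcomp Require Import all_boot all_order all_algebra.
From mathcomp Require Import zify ring.
From Stdlib Require Import Classical ClassicalEpsilon.
Import Order.TTheory GRing.Theory Num.Theory.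
Set Implicit Arguments. Unset Strict Implicit.
Local Open Scope ring_scope.


Definition EqH (F : fieldType) (zero : bool) (r c : nat) (a : nat -> nat -> F) :=
  forall n m l t, (nu zero 0 <= n + m)%N -> (nu zero 0 <= l + t)%N ->
  a n m * a l t = a n m * a l (t + (m + r * n + c))%N + a l t * a n (m + (t + r * l + c))%N.
Arguments EqH {F}.

Lemma row_eq (F : fieldType) (zero : bool) (r c : nat) (a : nat -> nat -> F) (HE : EqH zero r c a) l t t' :
  (nu zero 0 <= l + t)%N -> (nu zero 0 <= l + t')%N ->
  a l t' * a l t = (a l t' + a l t) * a l (t + t' + (r * l + c))%N.
Proof.
move=> Ht Ht'; rewrite (HE l t' l t) // mulrDl.
have -> : (t + (t' + r * l + c) = t + t' + (r * l + c))%N by lia.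
by have -> : (t' + (t + r * l + c) = t + t' + (r * l + c))%N by lia.
Qed.

Lemma row_nz (F : fieldType) (zero : bool) (r c : nat) (a : nat -> nat -> F) (HE : EqH zero r c a) l t t' :
  (nu zero 0 <= l + t)%N -> (nu zero 0 <= l + t')%N ->
  a l t != 0 -> a l t' != 0 -> a l (t + t' + (r * l + c))%N != 0.
Proof.
move=> Ht Ht' h1 h2; have := row_eq HE Ht Ht'.
have : a l t' * a l t != 0 by rewrite mulf_neq0.
by move=> /[swap] -> ; rewrite mulf_eq0 negb_or => /andP[].
Qed.

Lemma row_z (F : fieldType) (zero : bool) (r c : nat) (a : nat -> nat -> F) (HE : EqH zero r c a) l t t' :
  (nu zero 0 <= l + t)%N -> (nu zero 0 <= l + t')%N ->
  a l t = 0 -> a l t' != 0 -> a l (t + t' + (r * l + c))%N = 0.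
Proof.
move=> Ht Ht' h1 h2; have := row_eq HE Ht Ht'.
rewrite h1 mulr0 addr0 => /esym /eqP; rewrite mulf_eq0 (negbTE h2) /=.
by move/eqP.
Qed.

Lemma row_struct (F : fieldType) (zero : bool) (r c : nat) (a : nat -> nat -> F) (HE : EqH zero r c a) l k :
  (nu zero 0 <= l + k)%N -> a l k != 0 ->
  (forall t, (nu zero 0 <= l + t)%N -> (t < k)%N -> a l t = 0) ->
  exists Dl : nat, [/\ (0 < Dl)%N, (0 < k + (r * l + c))%N, (Dl %| k + (r * l + c))%N, (k < Dl + nu zero 0)%N &
     forall t, (nu zero 0 <= l + t)%N -> (a l t != 0 <-> exists s, t = (k + Dl * s)%N)].
Proof.
move=> Dk ak kmin.
have Kpos : (0 < k + (r * l + c))%N.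
  case: (posnP (k + (r * l + c))) => // K0.
  have := row_eq HE Dk Dk; have -> : (k + k + (r * l + c) = k)%N by lia.
  rewrite mulrDl => /(congr1 (fun y => y - a l k * a l k)); rewrite subrr addrK => /esym /eqP.
  by rewrite mulf_eq0 orbb (negbTE ak).
have ex2 : exists t, (k < t)%N && (a l t != 0).
  exists (k + k + (r * l + c))%N; rewrite (row_nz HE Dk Dk ak ak) andbT; lia.
case: (ex_minnP ex2) => k2 /andP[kk2 ak2] k2min.
have Dk2 : (nu zero 0 <= l + k2)%N by lia.
exists (k2 - k)%N.
have main : forall t, (nu zero 0 <= l + t)%N -> (a l t != 0 <-> exists s, t = (k + (k2 - k) * s)%N).
  elim/ltn_ind => t IH Dt.
  case: (ltnP t k2) => tk2.
    split.
      move=> at0; exists 0%N; rewrite muln0 addn0.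
      case: (ltngtP t k) => // tk.
        by move: at0; rewrite (kmin t Dt tk) eqxx.
      by have := k2min t; rewrite tk at0 => /(_ isT); lia.
    move=> [s hs]; case: s hs => [|s] hs; first by rewrite hs muln0 addn0.
    exfalso; move: hs tk2; rewrite mulnS; lia.
  have Du : (nu zero 0 <= l + (t - (k2 - k)))%N by lia.
  have := IH (t - (k2 - k))%N ltac:(lia) Du => IHu.
  have eqat : (a l t != 0) = (a l (t - (k2 - k))%N != 0).
    apply/idP/idP => h.
      have := row_nz HE Dt Dk h ak.
      have -> : (t + k + (r * l + c) = (t - (k2 - k)) + k2 + (r * l + c))%N by lia.
      apply: contraNN => /eqP h'; apply/eqP.
      by apply: (row_z HE Du Dk2 h' ak2).
    have := row_nz HE Du Dk2 h ak2.
    have -> : ((t - (k2 - k)) + k2 + (r * l + c) = t + k + (r * l + c))%N by lia.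
    apply: contraNN => /eqP h'; apply/eqP.
    by apply: (row_z HE Dt Dk h' ak).
  rewrite eqat IHu; split.
    move=> [s hs]; exists s.+1; rewrite mulnS; lia.
  move=> [s hs]; case: s hs => [|s] hs; first lia.
  exists s; rewrite mulnS in hs; lia.
split => //; first lia.
- have := row_nz HE Dk Dk ak ak.
  move/(main (k + k + (r * l + c))%N ltac:(lia)) => [s hs].
  have -> : (k + (r * l + c) = (k2 - k) * s)%N by lia.
  exact: dvdn_mulr.
- rewrite ltnNge; apply/negP => hk.
  have Du : (nu zero 0 <= l + (k - (k2 - k)))%N by lia.
  case: (eqVneq (a l (k - (k2 - k))%N) 0) => h.
    have := row_z HE Du Dk2 h ak2.
    have -> : ((k - (k2 - k)) + k2 + (r * l + c) = k + k + (r * l + c))%N by lia.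
    by move/eqP; rewrite (negbTE (row_nz HE Dk Dk ak ak)).
  by move: h; rewrite kmin ?eqxx //; lia.
Qed.

Lemma cross (F : fieldType) (zero : bool) (r c : nat) (a : nat -> nat -> F) (HE : EqH zero r c a) l kl Dl n :
  (0 < Dl)%N -> (nu zero 0 <= l + kl)%N ->
  (forall t, (nu zero 0 <= l + t)%N -> (a l t != 0 <-> exists s, t = (kl + Dl * s)%N)) ->
  forall m, (nu zero 0 <= n + m)%N -> a n m != 0 -> (Dl %| m + r * n + c)%N.
Proof.
move=> Dpos Dkl St m Dm anm.
set N := (m + r * n + c)%N.
case: (boolP (Dl %| N)%N) => // hN; exfalso.
have Dt : (nu zero 0 <= l + (kl + (Dl - 1) * N))%N by apply: leq_trans Dkl _; rewrite addnA leq_addr.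
have alt : a l (kl + (Dl - 1) * N)%N = 0.
  apply/eqP; apply: contraNT hN => /(St _ Dt) [s hs].
  have e : ((Dl - 1) * N = Dl * s)%N by lia.
  have e2 : ((Dl - 1) * N + N = Dl * N)%N.
    by rewrite -{2}(mul1n N) -mulnDl subnK.
  have : (Dl %| (Dl - 1) * N + N)%N by rewrite e2 dvdn_mulr.
  by rewrite dvdn_addr // e dvdn_mulr.
have := HE n m l (kl + (Dl - 1) * N)%N Dm Dt.
rewrite alt mulr0 mul0r addr0 => /esym /eqP; rewrite mulf_eq0 (negbTE anm) /=.
have -> : (kl + (Dl - 1) * N + (m + r * n + c) = kl + Dl * N)%N.
  rewrite -/N -addnA; congr addn; by rewrite -{2}(mul1n N) -mulnDl subnK.
have Dt2 : (nu zero 0 <= l + (kl + Dl * N))%N by apply: leq_trans Dkl _; rewrite addnA leq_addr.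
move=> /eqP h; have := proj2 (St _ Dt2) (ex_intro _ N erefl).
by rewrite h eqxx.
Qed.

Lemma inv_add (F : fieldType) (x y z : F) : x != 0 -> y != 0 -> z != 0 ->
  y * x = (y + x) * z -> z^-1 = x^-1 + y^-1.
Proof.
move=> hx hy hz e.
have e' : y + x = y * x / z by rewrite e mulfK.
rewrite (_ : x^-1 + y^-1 = (y + x) / (y * x)); last by field; rewrite hx hy.
by rewrite e'; field; rewrite hx hy hz.
Qed.

Lemma row_vals (F : fieldType) (charF0 : [pchar F] =i pred0) (zero : bool) (r c : nat) (a : nat -> nat -> F) (HE : EqH zero r c a) l k Dl p :
  (nu zero 0 <= l + k)%N -> (0 < Dl)%N -> (k + (r * l + c) = Dl * p)%N -> (0 < p)%N ->
  (forall t, (nu zero 0 <= l + t)%N -> (a l t != 0 <-> exists s, t = (k + Dl * s)%N)) ->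
  forall s, a l (k + Dl * s)%N = (k + r * l + c)%:R * a l k / ((k + r * l + c)%:R + Dl%:R * s%:R).
Proof.
move=> Dk Dpos hp ppos St.
have nat0 : forall n, (0 < n)%N -> (n%:R : F) != 0.
  by move=> n hn; rewrite ((pcharf0P F).1 charF0) -lt0n.
have Dj : forall j, (nu zero 0 <= l + (k + Dl * j))%N.
  by move=> j; apply: leq_trans Dk _; rewrite addnA leq_addr.
have nz : forall j, a l (k + Dl * j)%N != 0.
  by move=> j; apply/(St _ (Dj j)); exists j.
pose Psi j := (a l (k + Dl * j)%N)^-1.
have add : forall i j, Psi i + Psi j = Psi (i + j + p)%N.
  move=> i j; rewrite /Psi; symmetry; apply: inv_add; rewrite ?nz //.
  rewrite (row_eq HE (Dj i) (Dj j)); congr (_ * a l _); rewrite !mulnDr; lia.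
set lam := Psi 1%N - Psi 0%N.
have step : forall j, Psi j.+1 = Psi j + lam.
  move=> j; have e1 := add j 1%N; have e2 := add j.+1 0%N; rewrite addn0 in e2; rewrite addn1 in e1.
  by rewrite /lam addrA e1 -e2 addrK.
have lin : forall j, Psi j = Psi 0%N + j%:R * lam.
  by elim=> [|j IH]; rewrite ?mul0r ?addr0 // step IH -addrA -natr1 mulrDl mul1r.
have P0 : Psi 0%N = p%:R * lam.
  have e := add 0%N 0%N; rewrite !add0n (lin p) in e.
  exact: (addrI _ e).
have lam0 : lam != 0.
  apply: contraTneq (nz 0%N) => l0; move: P0; rewrite l0 mulr0 /Psi => /eqP.
  by rewrite invr_eq0 negbK; apply.
move=> s.
have -> : a l (k + Dl * s)%N = (Psi s)^-1 by rewrite /Psi invrK.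
have -> : a l k = (Psi 0%N)^-1 by rewrite /Psi invrK muln0 addn0.
have -> : ((k + r * l + c)%:R : F) = Dl%:R * p%:R by rewrite -natrM -hp addnA.
rewrite lin P0 -mulrDl -natrD.
have := nat0 _ Dpos; have := nat0 _ ppos; have := nat0 (p + s)%N ltac:(lia).
rewrite natrD => h1 h2 h3.
by field; rewrite -mulrDr !mulf_neq0 // ?h1 ?h2 ?h3 ?lam0.
Qed.



Lemma xy0 (F : fieldType) E : xy F 0 E = ('X^E)%:P.
Proof. by rewrite /xy expr0 mul1r. Qed.

Lemma xyM (F : fieldType) n m l t : xy F n m * xy F l t = xy F (n + l) (m + t).
Proof. by rewrite /xy mulrACA -exprD -polyCM -exprD. Qed.

Lemma inA_xy (F : fieldType) zero n m : (nu zero 0 <= n + m)%N -> inA zero (xy F n m).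
Proof.
rewrite /inA /nu; case: zero => //= H.
rewrite /in_F0 /xy mulrC coefCM coefXn.
case: n H => [|n] H /=; last by rewrite mulr0 coef0.
by rewrite mulr1 coefXn; case: m H.
Qed.

Lemma EqH_of_R (F : fieldType) (zero : bool) (r c : nat)
  (R : {poly {poly F}} -> {poly {poly F}}) (alpha : nat -> nat -> F)
  (R_add : forall p q, R (p + q) = R p + R q)
  (R_scale : forall (a : F) p, R (a%:P *: p) = a%:P *: R p)
  (R_RB : forall a b, inA zero a -> inA zero b ->
      R a * R b = R (R a * b + a * R b))
  (R_mon : forall n m, (nu zero 0 <= n + m)%N ->
      R (xy F n m) = (alpha n m)%:P%:P * xy F 0 (m + r * n + c)) :
  @EqH F zero r c alpha.
Proof.
move=> n m l t Hnm Hlt.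
have := R_RB _ _ (@inA_xy F zero n m Hnm) (@inA_xy F zero l t Hlt).
rewrite !R_mon // => H.
have e1 : ((alpha n m)%:P)%:P * xy F 0 (m + r * n + c) * xy F l t = (alpha n m)%:P *: xy F l (t + (m + r * n + c)).
  by rewrite -mulrA xyM mul_polyC add0n addnC.
have e2 : xy F n m * (((alpha l t)%:P)%:P * xy F 0 (t + r * l + c)) = (alpha l t)%:P *: xy F n (m + (t + r * l + c)).
  by rewrite mulrCA xyM mul_polyC addn0.
rewrite e1 e2 R_add !R_scale !R_mon in H; try lia.
set E := (m + r * n + c + (t + r * l + c))%N.
have h1 : (t + (m + r * n + c) + r * l + c)%N = E by rewrite /E; lia.
have h2 : (m + (t + r * l + c) + r * n + c)%N = E by rewrite /E; lia.
rewrite h1 h2 in H.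
move: H; rewrite -!mul_polyC !mulrA -!polyCM /xy !mulr1.
have -> : (alpha n m)%:P * 'X^(m + r * n + c) * (alpha l t)%:P * 'X^(t + r * l + c) = (alpha n m * alpha l t)%:P * 'X^E.
  by rewrite -mulrA mulrACA polyCM /E [in RHS]exprD.
rewrite -polyCD => /polyC_inj HH; have := congr1 (fun p : {poly F} => p`_E) HH.
by rewrite coefD !coefCM !coefXn eqxx !mulr1.
Qed.



Lemma R_zero (F : fieldType) (R : {poly {poly F}} -> {poly {poly F}})
  (R_add : forall p q, R (p + q) = R p + R q)
  (R_scale : forall (a : F) p, R (a%:P *: p) = a%:P *: R p)
  (H : forall n m, R (xy F n m) = 0) : forall p, R p = 0.
Proof.
have R0 : R 0 = 0.
  have := R_add 0 0; rewrite addr0 -{1}[R 0]addr0 => /addrI.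
  by move=> <-.
have Rsum : forall n (f : 'I_n -> {poly {poly F}}), (forall i, R (f i) = 0) -> R (\sum_i f i) = 0.
  elim=> [|n IH] f Hf; first by rewrite big_ord0.
  by rewrite big_ord_recr R_add IH ?Hf ?addr0.
have Hq : forall (q : {poly F}) i, R (q%:P * 'X^i) = 0.
  move=> q i; rewrite -[q]coefK poly_def rmorph_sum mulr_suml; apply: Rsum => j /=.
  have -> : (q`_j *: 'X^j)%:P * 'X^i = (q`_j)%:P *: xy F i j.
    by rewrite /xy -mul_polyC -mul_polyC polyCM -mulrA [_ * 'X^i]mulrC.
  by rewrite R_scale H scaler0.
move=> p; rewrite -[p]coefK poly_def; apply: Rsum => i /=.
by rewrite -mul_polyC Hq.
Qed.

Unset Implicit Arguments.

Theorem theorem4p1 (F : fieldType) (charF0 : [pchar F] =i pred0)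
  (zero : bool) (r c : nat) (hc : (nu zero 0 <= c)%N)
  (R : {poly {poly F}} -> {poly {poly F}}) (alpha : nat -> nat -> F)
  (R_add : forall p q, R (p + q) = R p + R q)
  (R_scale : forall (a : F) p, R (a%:P *: p) = a%:P *: R p)
  (R_RB : forall a b, inA zero a -> inA zero b ->
      R a * R b = R (R a * b + a * R b))
  (R_mon : forall n m, (nu zero 0 <= n + m)%N ->
      R (xy F n m) = (alpha n m)%:P%:P * xy F 0 (m + r * n + c)) :
  ((r = 0%N /\ c = 0%N) ->
     (if ~~ zero then forall p, R p = 0
      else exists k : nat, (0 < k)%N /\ alpha 0%N k != 0 /\
        forall n m, (1 <= n + m)%N ->
          alpha n m = if [&& n == 0%N, (0 < m)%N & (k %| m)%N]
                      then alpha 0%N k / (m %/ k)%:R else 0))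
  /\
  ((0 < r + c)%N ->
     exists (I : pred nat) (Delta : int) (k : nat -> nat),
       (forall i, I i ->
          [/\ alpha i (k i) != 0, (nu zero i <= k i)%N,
              (k i)%:Z - (nu zero 0)%:Z < Delta,
              Delta <= (k i + r * i + c)%N%:Z
            & (Delta %| (k i + r * i + c)%N%:Z)%Z]) /\
       (forall l t, (nu zero 0 <= l + t)%N ->
          (forall s : nat, I l -> t%:Z = (k l)%:Z + Delta * s%:Z ->
             alpha l t = (k l + r * l + c)%:R * alpha l (k l)
                         / ((k l + r * l + c)%:R + Delta%:~R * s%:R)) /\
          (~ (I l /\ exists s : nat, t%:Z = (k l)%:Z + Delta * s%:Z) ->
             alpha l t = 0))).
Proof.
have HE := @EqH_of_R F zero r c R alpha R_add R_scale R_RB R_mon.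
split.
  move=> [r0 c0]; subst r c.
  case: zero hc HE R_mon R_RB => hc HE R_mon R_RB /=; first by move: hc; rewrite /nu.
  have a0 : forall n, alpha n 0%N = 0.
    move=> n; have := HE n 0%N n 0%N isT isT; rewrite !mul0n !addn0.
    move=> /(congr1 (fun y => y - alpha n 0%N * alpha n 0%N)); rewrite subrr addrK => /esym /eqP.
    by rewrite mulf_eq0 orbb => /eqP.
  have a1 : forall n m, alpha n m = 0.
    move=> n m; have := HE n m n 0%N isT isT; rewrite !mul0n !addn0 !add0n a0 mulr0 mul0r addr0.
    by move=> /esym /eqP; rewrite mulf_eq0 orbb => /eqP.
  apply: R_zero => // n m; by rewrite R_mon // a1 mul0r.
move=> _.
pose P l t := (nu zero 0 <= l + t)%N && (alpha l t != 0).
pose Ib l : bool := if excluded_middle_informative (exists t, P l t) then true else false.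
pose kf l : nat := match excluded_middle_informative (exists t, P l t) with
                   | left H => ex_minn H | right _ => 0%N end.
have Ik : forall l, Ib l -> [/\ (nu zero 0 <= l + kf l)%N, alpha l (kf l) != 0 &
            forall t, (nu zero 0 <= l + t)%N -> (t < kf l)%N -> alpha l t = 0].
  move=> l; rewrite /Ib /kf; case: excluded_middle_informative => // H _.
  case: ex_minnP => k /andP[Dk ak] kmin; split=> // t Dt tk.
  apply/eqP; apply: contraTeq tk => at0; rewrite -leqNgt; apply: kmin.
  by rewrite /P Dt; move: at0; case: (alpha l t == 0).
have nI : forall l t, ~~ Ib l -> (nu zero 0 <= l + t)%N -> alpha l t = 0.
  move=> l t; rewrite /Ib; case: excluded_middle_informative => // H _ Dt.
  case: (eqVneq (alpha l t) 0) => // at0; exfalso; apply: H; exists t; by apply/andP; split.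
have Str : forall l, Ib l -> exists Dl : nat,
    [/\ (0 < Dl)%N, (0 < kf l + (r * l + c))%N, (Dl %| kf l + (r * l + c))%N,
        (kf l < Dl + nu zero 0)%N &
        forall t, (nu zero 0 <= l + t)%N -> (alpha l t != 0 <-> exists s, t = (kf l + Dl * s)%N)].
  move=> l Il; have [Dk ak kmin] := Ik l Il; have := row_struct HE Dk ak kmin; apply.
case: (classic (exists l, Ib l)) => [[l0 Il0] | noI]; last first.
  exists (fun _ => false), 1%:Z, (fun _ => 0%N); split => // l t Dt; split => // _.
  apply: nI Dt; apply/negP => Il; apply: noI; by exists l.
have [D0 [D0pos K0pos D0dvd D0lt St0]] := Str l0 Il0.
have [Dk0 ak0 _] := Ik l0 Il0.
have Sl : forall l, Ib l -> [/\ (0 < kf l + (r * l + c))%N, (D0 %| kf l + (r * l + c))%N,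
        (kf l < D0 + nu zero 0)%N &
        forall t, (nu zero 0 <= l + t)%N -> (alpha l t != 0 <-> exists s, t = (kf l + D0 * s)%N)].
  move=> l Il; have [Dl [Dlpos Klpos Dldvd Dllt Stl]] := Str l Il.
  have [Dkl akl _] := Ik l Il.
  suff e : Dl = D0 by rewrite -e.
  have h1 : (Dl %| D0)%N.
    have c1 := cross HE Dlpos Dkl Stl Dk0 ak0.
    have Dk0' : (nu zero 0 <= l0 + (kf l0 + D0 * 1))%N by apply: leq_trans Dk0 _; rewrite addnA leq_addr.
    have c2 := cross HE Dlpos Dkl Stl Dk0' (proj2 (St0 _ Dk0') (ex_intro _ 1%N erefl)).
    have e : (kf l0 + D0 * 1 + r * l0 + c = (kf l0 + r * l0 + c) + D0)%N by lia.
    by rewrite e dvdn_addr in c2.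
  have h2 : (D0 %| Dl)%N.
    have c1 := cross HE D0pos Dk0 St0 Dkl akl.
    have Dkl' : (nu zero 0 <= l + (kf l + Dl * 1))%N by apply: leq_trans Dkl _; rewrite addnA leq_addr.
    have c2 := cross HE D0pos Dk0 St0 Dkl' (proj2 (Stl _ Dkl') (ex_intro _ 1%N erefl)).
    have e : (kf l + Dl * 1 + r * l + c = (kf l + r * l + c) + Dl)%N by lia.
    by rewrite e dvdn_addr in c2.
  by apply/eqP; rewrite eqn_dvd h1 h2.
exists Ib, D0%:Z, kf; split.
  move=> i Ii; have [Dk ak _] := Ik i Ii; have [Kpos dv lt St] := Sl i Ii.
  split => //.
  - case: (posnP i) => [i0|ipos]; first by move: Dk; rewrite i0 add0n.
    by rewrite /nu (gtn_eqF ipos) andbF.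
  - lia.
  - rewrite lez_nat; apply: dvdn_leq; rewrite -addnA //.
  - by rewrite /dvdz /= -addnA.
move=> l t Dt; split.
  move=> s Il e.
  have e' : t = (kf l + D0 * s)%N by lia.
  have [Kpos dv lt St] := Sl l Il.
  have [Dk ak _] := Ik l Il.
  case/dvdnP: dv => q hq.
  have qpos : (0 < q)%N by move: Kpos; rewrite hq muln_gt0 => /andP[].
  rewrite e'; exact: (row_vals charF0 HE Dk D0pos (etrans hq (mulnC q D0)) qpos St s).
move=> H; case: (boolP (Ib l)) => Il; last exact: nI.
have [Kpos dv lt St] := Sl l Il.
apply/eqP; rewrite -[_ == 0]negbK; apply/negP => /(St _ Dt) [s hs]; apply: H; split=> //.
by exists s; rewrite hs PoszD PoszM.

Qed.
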